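(* Let $p$ be any sensible $\lambda$-PPM on the set $\Lambda$ of $\lambda$-terms, and let $p_{\mathrm{ctx}}$ be the contextual partial metric defined from an arbitrary enumeration $(\mathtt C_n[-])_{n\in\mathbb N}$ of all contexts by $p_{\mathrm{ctx}}(M,N)=\sum\{2^{-n}\mid \mathtt C_n[M]\text{ unsolvable or }\mathtt C_n[N]\text{ unsolvable}\}$. Then $p\sqsubseteq p_{\mathrm{ctx}}$, i.e. $\mathcal O_{p_{\mathrm{ctx}}}(\Lambda)\subseteq\mathcal O_p(\Lambda)$.
   Context: Contexts are $\lambda$-terms with one hole; solvable means having a head normal form. A partial pseudo-metric (PPM) on $X$ is $p:X\times X\to[0,+\infty]$ with $p(x,x)\leq p(x,y)$, $p(x,y)=p(y,x)$, $p(x,y)\leq p(x,z)+p(z,y)-p(z,z)$. Preorder: $x\leq_p y$ iff $p(x,y)\leq p(x,x)$; $x\simeq_p y$ iff $x\leq_p y$ and $y\leq_p x$. Open balls $B^p_\epsilon(x)=\{y\mid p(y,x)<p(x,x)+\epsilon\}$, and $\mathcal O_p(X)$ is the topology of unions of open balls. For PPMs $p,p'$ on $X$, $p\sqsubseteq p'$ means $\mathcal O_{p'}(X)\subseteq\mathcal O_p(X)$. A $\lambda$-theory is an equivalence on $\Lambda$ closed under application on both sides and under $\lambda$-abstraction and containing $\beta$-conversion. A $\lambda$-PPM is a PPM $p$ on $\Lambda$ such that $\simeq_p$ is a $\lambda$-theory and every context $\mathtt C[-]$ induces a map $\Lambda\to\Lambda$ continuous for $\mathcal O_p(\Lambda)$.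 It is sensible if every unsolvable term $M$ satisfies $M\leq_p N$ for all $N$, and no solvable term has this property. *)

(* Defs.v *)
From Stdlib Require Import Reals Arith Relations ClassicalEpsilon.
From Coquelicot Require Import Coquelicot.
Open Scope R_scope.

Inductive term : Type :=
| Var : nat -> term
| App : term -> term -> term
| Lam : term -> term.

Fixpoint lift (k n : nat) (t : term) : term :=
  match t with
  | Var i => if Nat.ltb i k then Var i else Var (i + n)
  | App a b => App (lift k n a) (lift k n b)
  | Lam a => Lam (lift (S k) n a)
  end.

Fixpoint subst (k : nat) (u : term) (t : term) : term :=
  match t with
  | Var i => if Nat.eqb i k then lift 0 k u
             else if Nat.ltb k i then Var (Nat.pred i) else Var i
  | App a b => App (subst k u a) (subst k u b)
  | Lam a => Lam (subst (S k) u a)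
  end.

Inductive beta1 : term -> term -> Prop :=
| beta_redex : forall a b, beta1 (App (Lam a) b) (subst 0 b a)
| beta_appl : forall a a' b, beta1 a a' -> beta1 (App a b) (App a' b)
| beta_appr : forall a b b', beta1 b b' -> beta1 (App a b) (App a b')
| beta_lam : forall a a', beta1 a a' -> beta1 (Lam a) (Lam a').

Definition beta_star : term -> term -> Prop := clos_refl_trans term beta1.
Definition beta_conv : term -> term -> Prop := clos_refl_sym_trans term beta1.

Inductive head_app : term -> Prop :=
| ha_var : forall i, head_app (Var i)
| ha_app : forall a b, head_app a -> head_app (App a b).

Inductive hnf : term -> Prop :=
| hnf_head : forall a, head_app a -> hnf a
| hnf_lam : forall a, hnf a -> hnf (Lam a).

Definition solvable (M : term) : Prop := exists N, beta_star M N /\ hnf N.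

Inductive ctx : Type :=
| Hole : ctx
| CAppL : ctx -> term -> ctx
| CAppR : term -> ctx -> ctx
| CLam : ctx -> ctx.

(* plugging (variable capture allowed, as for contexts) *)
Fixpoint plug (C : ctx) (M : term) : term :=
  match C with
  | Hole => M
  | CAppL C' N => App (plug C' M) N
  | CAppR N C' => App N (plug C' M)
  | CLam C' => Lam (plug C' M)
  end.

(* The triangle law p(x,y) <= p(x,z)+p(z,y)-p(z,z) is written additively,
   p(x,y)+p(z,z) <= p(x,z)+p(z,y), to make sense with +oo values. *)
Definition PPM {X : Type} (p : X -> X -> Rbar) : Prop :=
  (forall x y, Rbar_le (Finite 0) (p x y)) /\
  (forall x y, Rbar_le (p x x) (p x y)) /\
  (forall x y, p x y = p y x) /\
  (forall x y z, Rbar_le (Rbar_plus (p x y) (p z z))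
                         (Rbar_plus (p x z) (p z y))).

Definition ple {X : Type} (p : X -> X -> Rbar) (x y : X) : Prop :=
  Rbar_le (p x y) (p x x).
Definition peq {X : Type} (p : X -> X -> Rbar) (x y : X) : Prop :=
  ple p x y /\ ple p y x.

Definition ball_p {X : Type} (p : X -> X -> Rbar) (x : X) (eps : R) (y : X) : Prop :=
  Rbar_lt (p y x) (Rbar_plus (p x x) (Finite eps)).

Definition open_p {X : Type} (p : X -> X -> Rbar) (U : X -> Prop) : Prop :=
  exists S : X -> R -> Prop,
    (forall x eps, S x eps -> 0 < eps) /\
    (forall y, U y <-> exists x eps, S x eps /\ ball_p p x eps y).

Definition ppm_below {X : Type} (p p' : X -> X -> Rbar) : Prop :=
  forall U, open_p p' U -> open_p p U.

Definition continuous_p {X : Type} (p : X -> X -> Rbar) (f : X -> X) : Prop :=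
  forall U, open_p p U -> open_p p (fun x => U (f x)).

Definition lambda_theory (E : term -> term -> Prop) : Prop :=
  equivalence term E /\
  (forall M N P, E M N -> E (App M P) (App N P)) /\
  (forall M N P, E M N -> E (App P M) (App P N)) /\
  (forall M N, E M N -> E (Lam M) (Lam N)) /\
  (forall M N, beta_conv M N -> E M N).

Definition lambda_PPM (p : term -> term -> Rbar) : Prop :=
  PPM p /\ lambda_theory (peq p) /\
  (forall C : ctx, continuous_p p (plug C)).

Definition sensible (p : term -> term -> Rbar) : Prop :=
  (forall M, ~ solvable M -> forall N, ple p M N) /\
  (forall M, solvable M -> ~ (forall N, ple p M N)).

Definition enumeration (e : nat -> ctx) : Prop :=
  (forall C, exists n, e n = C) /\ (forall n m, e n = e m -> n = m).

Definition ctx_weight (e : nat -> ctx) (M N : term) (n : nat) : R :=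
  if excluded_middle_informative
       (~ solvable (plug (e n) M) \/ ~ solvable (plug (e n) N))
  then (/ 2) ^ n else 0.

Definition p_ctx (e : nat -> ctx) (M N : term) : Rbar :=
  Finite (Series (ctx_weight e M N)).

(* Main.v *)
Require Import Defs.
From Stdlib Require Import Reals.
From Coquelicot Require Import Coquelicot.
From Stdlib Require Import Lra Lia Classical Relations ClassicalEpsilon.

Section Aux.
Variable p : term -> term -> Rbar.
Hypothesis Hnn : forall x y, Rbar_le (Finite 0) (p x y).
Hypothesis Hdiag : forall x y, Rbar_le (p x x) (p x y).
Hypothesis Hsym : forall x y, p x y = p y x.
Hypothesis Htri : forall x y z, Rbar_le (Rbar_plus (p x y) (p z z))
                         (Rbar_plus (p x z) (p z y)).
Hypothesis Hfin : forall M, exists c, p M M = Finite c.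

Lemma ball_mono y d d' u : d <= d' -> ball_p p y d u -> ball_p p y d' u.
Proof.
  unfold ball_p; destruct (Hfin y) as [c Hc]; rewrite Hc; simpl.
  destruct (p u y); simpl; intros; lra || tauto.
Qed.

Lemma ball_self y d : 0 < d -> ball_p p y d y.
Proof.
  unfold ball_p; destruct (Hfin y) as [c Hc]; rewrite Hc; simpl; lra.
Qed.

Lemma open_local W y : open_p p W -> W y ->
  exists d, 0 < d /\ forall u, ball_p p y d u -> W u.
Proof.
  intros [S [Spos HS]] Wy.
  destruct (proj1 (HS y) Wy) as [x [a [Sxa Bxy]]].
  pose proof (Spos _ _ Sxa) as apos.
  destruct (Hfin x) as [cx Hx]. destruct (Hfin y) as [cy Hy].
  unfold ball_p in Bxy; rewrite Hx in Bxy; simpl in Bxy.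
  pose proof (Hnn y x) as nyx.
  destruct (p y x) as [t| |] eqn:Et; simpl in Bxy, nyx; try tauto.
  exists (cx + a - t); split; [lra|].
  intros u Bu. apply HS. exists x, a; split; [exact Sxa|].
  unfold ball_p in *; rewrite Hy in Bu; rewrite Hx; simpl in *.
  pose proof (Hnn u y) as nuy.
  destruct (p u y) as [s| |] eqn:Es; simpl in Bu, nuy; try tauto.
  pose proof (Htri u x y) as T. rewrite Hy, Es, Et in T.
  pose proof (Hnn u x) as nux.
  destruct (p u x) as [w| |]; simpl in T, nux |- *; try tauto. lra.
Qed.
End Aux.

Lemma tail_bound (a b : nat -> R) (N : nat) :
  (forall n, 0 <= a n <= (/2)^n) -> (forall n, 0 <= b n <= (/2)^n) ->
  (forall n, (n <= N)%nat -> b n <= a n) ->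
  Series b <= Series a + 2 * (/2)^(S N).
Proof.
  intros Ha Hb Hba.
  assert (Hq : Rabs (/2) < 1) by (rewrite Rabs_pos_eq; lra).
  assert (Eg := ex_series_geom _ Hq).
  assert (Ea : ex_series a).
  { apply (ex_series_le a (fun n => (/2)^n)); [|exact Eg].
    intros n. change (Rabs (a n) <= (/2)^n). rewrite Rabs_pos_eq; apply Ha. }
  assert (Eb : ex_series b).
  { apply (ex_series_le b (fun n => (/2)^n)); [|exact Eg].
    intros n. change (Rabs (b n) <= (/2)^n). rewrite Rabs_pos_eq; apply Hb. }
  rewrite (Series_incr_n a (S N)), (Series_incr_n b (S N)); try lia; auto.
  simpl Init.Nat.pred.
  assert (H1 : sum_f_R0 b N <= sum_f_R0 a N) by (apply sum_Rle; auto).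
  assert (H2 : Series (fun k => b (S N + k)%nat) <= 2 * (/2)^(S N)).
  { apply Rle_trans with (Series (fun k => (/2)^(S N) * (/2)^k)).
    - apply Series_le.
      + intros n; split; [apply Hb|]. rewrite <- pow_add. apply Hb.
      + exact (@ex_series_scal_l R_AbsRing R_NormedModule ((/2)^(S N)) _ Eg).
    - rewrite Series_scal_l, Series_geom by exact Hq.
      replace (/ (1 - /2)) with 2 by field. lra. }
  assert (H3 : 0 <= Series (fun k => a (S N + k)%nat)).
  { apply Rle_trans with (Series (fun _ : nat => 0)).
    - replace (Series (fun _ : nat => 0)) with 0; [lra|].
      rewrite (Series_ext (fun _ : nat => 0) (fun n => 0 * (/2)^n)) by (intros; ring).
      rewrite Series_scal_l; ring.
    - apply Series_le. intros; split; [lra|apply Ha].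
      apply (ex_series_incr_n a (S N)). exact Ea. }
  lra.
Qed.

Theorem mainTheorem3 :
  forall (p : term -> term -> Rbar) (e : nat -> ctx),
    lambda_PPM p -> sensible p -> enumeration e ->
    ppm_below p (p_ctx e).
Proof.
  intros p e [[Hnn [Hdiag [Hsym Htri]]] [Hth Hcont]] [Hs1 Hs2] _.
  destruct Hth as [_ [_ [_ [_ Hbeta]]]].
  assert (Hfin : forall M, exists c, p M M = Finite c).
  { set (v := Defs.Var 0).
    assert (Sv : solvable v).
    { exists v; split; [apply rt_refl| apply hnf_head; constructor]. }
    destruct (not_all_ex_not _ _ (Hs2 v Sv)) as [N HN].
    unfold ple in HN.
    pose proof (Hnn v v) as nvv.
    destruct (p v v) as [cv| |] eqn:Ecv; simpl in nvv; try tauto.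
    2:{ exfalso; apply HN. destruct (p v N); simpl; auto. }
    assert (Ob : open_p p (ball_p p v 1)).
    { exists (fun x e => x = v /\ e = 1); split.
      - intros x e0 [_ ->]; lra.
      - intros y; split.
        + intros B; exists v, 1; auto.
        + intros [x [e0 [[-> ->] B]]]; exact B. }
    pose proof (Hcont (CAppR (Lam (Defs.Var 1)) Hole) _ Ob) as [S [Spos HS]].
    intros M.
    assert (Hb : ball_p p v 1 (plug (CAppR (Lam (Defs.Var 1)) Hole) M)).
    { simpl. unfold ball_p. rewrite Ecv.
      assert (Hc : beta_conv (Defs.App (Lam (Defs.Var 1)) M) v).
      { apply rst_step. exact (beta_redex (Defs.Var 1) M). }
      destruct (Hbeta _ _ Hc) as [_ H2]. unfold ple in H2.
      rewrite Ecv, Hsym in H2. revert H2.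
      destruct (p (Defs.App (Lam (Defs.Var 1)) M) v); simpl; intros; lra || tauto. }
    destruct (proj1 (HS M) Hb) as [x [a [_ Bx]]].
    unfold ball_p in Bx.
    pose proof (Hdiag M x) as D. pose proof (Hnn M M) as nMM.
    destruct (p M M) as [c| |]; simpl in nMM; try tauto.
    - exists c; reflexivity.
    - exfalso. destruct (p M x); simpl in D; try tauto. }
  assert (Hsol : open_p p solvable).
  { exists (fun M d => 0 < d /\ solvable M /\ forall z, ball_p p M d z -> solvable z).
    split; [intros ? ? [H _]; exact H|].
    intros M; split.
    2:{ intros [x [d [[_ [_ H]] B]]]. exact (H _ B). }
    intros SM.
    destruct (not_all_ex_not _ _ (Hs2 M SM)) as [N HN].
    unfold ple in HN.
    destruct (Hfin M) as [cM HcM].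
    assert (Hkey : forall d, 0 < d -> Rbar_le (Finite (cM + d)) (p M N) ->
              exists x d0, (0 < d0 /\ solvable x /\ forall z, ball_p p x d0 z -> solvable z)
                 /\ ball_p p x d0 M).
    { intros d dpos Hd. exists M, d; split; [split; [exact dpos|split; [exact SM|]]|].
      - intros z Bz. apply NNPP; intros nz.
        pose proof (Hs1 z nz N) as Hz. unfold ple in Hz.
        destruct (Hfin z) as [cz Hcz].
        pose proof (Htri M N z) as T. rewrite Hcz, (Hsym M z) in T.
        unfold ball_p in Bz. rewrite HcM in Bz. rewrite Hcz in Hz.
        pose proof (Hnn z N) as nzN. pose proof (Hnn z M) as nzM.
        destruct (p z N) as [u| |]; simpl in Hz, nzN; try tauto.
        destruct (p z M) as [s| |]; simpl in Bz, nzM; try tauto.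
        destruct (p M N) as [q| |]; simpl in T, Hd; try tauto. lra.
      - apply ball_self; auto. }
    rewrite HcM in HN.
    pose proof (Hnn M N) as nMN.
    destruct (p M N) as [q| |] eqn:Eq; simpl in HN, nMN; try tauto.
    - apply (Hkey (q - cM)); [lra|]. simpl; lra.
    - apply (Hkey 1); [lra|]. simpl; auto. }
  intros U [S0 [Spos HU]].
  exists (fun z d => 0 < d /\ forall u, ball_p p z d u -> U u).
  split; [intros ? ? [H _]; exact H|].
  intros y; split.
  2:{ intros [z [d [[_ H] B]]]. exact (H _ B). }
  intros Uy.
  destruct (proj1 (HU y) Uy) as [x [eps [Sx Bxy]]].
  pose proof (Spos _ _ Sx) as epos.
  unfold ball_p, p_ctx in Bxy; simpl in Bxy.
  set (r := Series (ctx_weight e x x) + eps - Series (ctx_weight e y x)).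
  assert (rpos : 0 < r) by (unfold r; lra).
  assert (Hq : Rabs (/2) < 1) by (rewrite Rabs_pos_eq; lra).
  destruct (pow_lt_1_zero _ Hq (r/2)) as [N HN]; [lra|].
  assert (HNr : 2 * (/2)^(S N) < r).
  { specialize (HN (S N) ltac:(lia)). rewrite Rabs_pos_eq in HN.
    - lra.
    - apply pow_le; lra. }
  assert (Hnb : forall K, exists d, 0 < d /\ forall u, ball_p p y d u ->
             forall n, (n <= K)%nat -> solvable (plug (e n) y) -> solvable (plug (e n) u)).
  { induction K as [|K IH].
    - destruct (classic (solvable (plug (e 0%nat) y))) as [Sy|nSy].
      + destruct (open_local p Hnn Htri Hfin _ y (Hcont (e 0%nat) _ Hsol) Sy)
          as [d [dpos Hd]].
        exists d; split; auto. intros u Bu n Hn _.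
        assert (n = 0%nat) by lia; subst. apply Hd; auto.
      + exists 1; split; [lra|]. intros u Bu n Hn Sn.
        assert (n = 0%nat) by lia; subst. tauto.
    - destruct IH as [d1 [d1pos H1]].
      destruct (classic (solvable (plug (e (S K)) y))) as [Sy|nSy].
      + destruct (open_local p Hnn Htri Hfin _ y (Hcont (e (S K)) _ Hsol) Sy)
          as [d [dpos Hd]].
        exists (Rmin d1 d); split; [apply Rmin_pos; auto|].
        intros u Bu n Hn Sn.
        destruct (Nat.eq_dec n (S K)) as [->|ne].
        * apply Hd. apply (ball_mono p Hfin y (Rmin d1 d)); auto. apply Rmin_r.
        * apply (H1 u); auto; [|lia].
          apply (ball_mono p Hfin y (Rmin d1 d)); auto. apply Rmin_l.
      + exists d1; split; auto. intros u Bu n Hn Sn.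
        destruct (Nat.eq_dec n (S K)) as [->|ne]; [tauto|].
        apply (H1 u); auto; lia. }
  destruct (Hnb N) as [d [dpos Hd]].
  exists y, d; split; [split; [exact dpos|]|apply ball_self; auto].
  intros u Bu. apply HU. exists x, eps; split; [exact Sx|].
  unfold ball_p, p_ctx; simpl.
  assert (Wb : forall M N n, 0 <= ctx_weight e M N n <= (/2)^n).
  { intros M0 N0 n. unfold ctx_weight.
    destruct excluded_middle_informative; split; try lra;
      try (apply pow_le; lra); lra || (apply Rle_refl) || (apply pow_le; lra). }
  assert (Hle : Series (ctx_weight e u x) <= Series (ctx_weight e y x) + 2 * (/2)^(S N)).
  { apply tail_bound; auto.
    intros n Hn. unfold ctx_weight.
    destruct excluded_middle_informative as [H|H];
      destruct excluded_middle_informative as [H'|H']; try lra.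
    - exfalso. apply H'. destruct H as [H|H]; [left|right; exact H].
      intros Sy. apply H. exact (Hd u Bu n Hn Sy).
    - apply pow_le; lra. }
  unfold r in HNr. lra.
Qed.
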